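(* Let $G$ be a graph with adjacency matrix $A$ whose degrees $d=A\mathbf 1$ are all positive, let $e=(i,j)$, $i\ne j$, $a_{ij}>0$, be any edge, and let $r>0$. Then the regularized centrality score satisfies $c_r(e)\ge 0$.
   Context: Graphs are undirected and possibly weighted on vertex set $\{1,\dots,n\}$, with symmetric nonnegative adjacency matrix $A=(a_{k\ell})$; $D=\mathrm{diag}(d)$, $\|d\|_1=\sum_kd_k$, $D^{\pm1/2}=\mathrm{diag}(d_k^{\pm1/2})$; $e_k$ is the $k$-th column of the identity and $\mathbf 1$ the all-ones vector. For $r>0$ and a symmetric nonnegative matrix $B$ with $B\mathbf 1=d$, the regularized Kemeny constant is $K_r(B)=\operatorname{Tr}\Big(\big((1+r)I-D^{-1/2}BD^{-1/2}+\tfrac{1}{\|d\|_1}D^{1/2}\mathbf 1\mathbf 1^TD^{1/2}\big)^{-1}\Big)-(1+r)^{-1}$. With $v=e_i-e_j$ and $\widehat A=A+a_{ij}vv^T$ (deleting edge $e$ and adding loops of weight $a_{ij}$ at $i$ and $j$; note $\widehat A\mathbf 1=d$), the regularized Kemeny-based centrality score is $c_r(e)=K_r(\widehat A)-K_r(A)$. *)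

(* Defs.v *)
From mathcomp Require Import all_boot all_order all_algebra.
Set Implicit Arguments. Unset Strict Implicit. Unset Printing Implicit Defensive.
Import Order.TTheory GRing.Theory Num.Theory.
Local Open Scope ring_scope.

Definition deg (R : rcfType) n (B : 'M[R]_n) (k : 'I_n) : R := \sum_l B k l.

Definition vol (R : rcfType) n (B : 'M[R]_n) : R := \sum_k deg B k.

Definition Dhalf (R : rcfType) n (B : 'M[R]_n) : 'M[R]_n :=
  diag_mx (\row_k Num.sqrt (deg B k)).
Definition Dmhalf (R : rcfType) n (B : 'M[R]_n) : 'M[R]_n :=
  diag_mx (\row_k (Num.sqrt (deg B k))^-1).

Definition ones (R : rcfType) n : 'cV[R]_n := const_mx 1.

Definition kemenyMx (R : rcfType) n (r : R) (B : 'M[R]_n) : 'M[R]_n :=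
  (1 + r)%:M - Dmhalf B *m B *m Dmhalf B
  + (vol B)^-1 *: (Dhalf B *m ones R n *m (ones R n)^T *m Dhalf B).

Definition kemeny_reg (R : rcfType) n (r : R) (B : 'M[R]_n) : R :=
  \tr (invmx (kemenyMx r B)) - (1 + r)^-1.

Definition evec (R : rcfType) n (i j : 'I_n) : 'cV[R]_n :=
  \col_k ((k == i)%:R - (k == j)%:R).

Definition Ahat (R : rcfType) n (A : 'M[R]_n) (i j : 'I_n) : 'M[R]_n :=
  A + A i j *: (evec R i j *m (evec R i j)^T).

Definition centrality (R : rcfType) n (r : R) (A : 'M[R]_n) (i j : 'I_n) : R :=
  kemeny_reg r (Ahat A i j) - kemeny_reg r A.

(* Main.v *)
Require Import Defs.
From mathcomp Require Import all_boot all_order all_algebra.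
Set Implicit Arguments. Unset Strict Implicit. Unset Printing Implicit Defensive.
Import Order.TTheory GRing.Theory Num.Theory.
Local Open Scope ring_scope.

Lemma kemeny_entry (R : rcfType) n (r : R) (B : 'M[R]_n) k l :
  kemenyMx r B k l = (1 + r) *+ (k == l)
   - (Num.sqrt (deg B k))^-1 * B k l * (Num.sqrt (deg B l))^-1
   + (vol B)^-1 * (Num.sqrt (deg B k) * Num.sqrt (deg B l)).
Proof.
rewrite /kemenyMx /Dmhalf /Dhalf mul_diag_mx !mul_mx_diag !mxE.
rewrite big_ord1 mul_diag_mx !mxE.
by rewrite !mulr1.
Qed.

Lemma qf_sum (R : rcfType) n (M : 'M[R]_n) (x : 'rV[R]_n) :
  (x *m M *m x^T) 0 0 = \sum_k \sum_l (x 0 k * M k l * x 0 l).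
Proof.
rewrite mxE exchange_big; apply: eq_bigr => l _.
by rewrite !mxE mulr_suml; apply: eq_bigr => k _.
Qed.

Definition PD (R : rcfType) n (M : 'M[R]_n) :=
  forall x : 'rV[R]_n, x != 0 -> 0 < (x *m M *m x^T) 0 0.

From mathcomp Require Import ring lra.

Lemma kemeny_PD (R : rcfType) n (r : R) (B : 'M[R]_n) :
  B^T = B -> (forall k l, 0 <= B k l) -> (forall k, 0 < deg B k) -> 0 < r ->
  PD (kemenyMx r B).
Proof.
move=> sB B0 d0 r0 x x0.
pose s k := Num.sqrt (deg B k).
have s0 k : 0 < s k by rewrite sqrtr_gt0.
have ss k : deg B k = s k ^+ 2 by rewrite sqr_sqrtr // ltW.
pose y k := x 0 k / s k.
have Bsym k l : B k l = B l k by rewrite -[in LHS]sB mxE.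
rewrite qf_sum.
have step k : \sum_l x 0 k * kemenyMx r B k l * x 0 l =
   \sum_l ((r * (x 0 k * x 0 l)) *+ (k == l) + B k l * (y k ^+ 2 - y k * y l)
           + (vol B)^-1 * (s k * x 0 k) * (s l * x 0 l)).
  apply/eqP; rewrite -subr_eq0 -sumrB.
  rewrite (eq_bigr (fun l => (x 0 k * x 0 l) *+ (k == l) - B k l * y k ^+ 2)); last first.
    move=> l _; rewrite kemeny_entry -/(s k) -/(s l) /y.
    by case: (k == l); rewrite ?mulr1n ?mulr0n; ring.
  rewrite sumrB (bigD1 k) //= big1 ?addr0; last first.
    by move=> l /negbTE; rewrite eq_sym => ->; rewrite mulr0n.
  rewrite eqxx mulr1n -mulr_suml -/(deg B k) ss /y.
  by apply/eqP; field; rewrite gt_eqF.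
rewrite (eq_bigr _ (fun k _ => step k)).
under eq_bigr do rewrite !big_split.
rewrite !big_split /=.
set a := (X in X + _ + _); set T := (X in _ + X + _); set c := (X in _ + _ + X).
have ha : 0 < a.
  have [k xk] : exists k, x 0 k != 0.
    apply/existsP; apply: contraNT x0; rewrite negb_exists => /forallP H.
    by apply/eqP/matrixP => p q; rewrite ord1 mxE; apply/eqP; move: (H q); rewrite negbK.
  have e k0 : \sum_l (r * (x 0 k0 * x 0 l)) *+ (k0 == l) = r * x 0 k0 ^+ 2.
    rewrite (bigD1 k0) //= big1 ?addr0 ?eqxx ?mulr1n ?expr2 //.
    by move=> l /negbTE; rewrite eq_sym => ->; rewrite mulr0n.
  rewrite /a (eq_bigr _ (fun k _ => e k)) (bigD1 k) //=.
  have h1 : 0 < r * x 0 k ^+ 2 by rewrite mulr_gt0 // exprn_even_gt0.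
  have h2 : 0 <= \sum_(i0 | i0 != k) r * x 0 i0 ^+ 2.
    by apply: sumr_ge0 => p _; apply: mulr_ge0; [exact: ltW | exact: sqr_ge0].
  lra.
have hb : 0 <= T.
  have Tsw : T = \sum_k \sum_l B k l * (y l ^+ 2 - y k * y l).
    rewrite /T exchange_big; apply: eq_bigr => k _; apply: eq_bigr => l _.
    by rewrite Bsym mulrC [y l * _]mulrC [_ * (_ - _)]mulrC.
  have T2 : T + T = \sum_k \sum_l B k l * (y k - y l) ^+ 2.
    rewrite {2}Tsw -big_split; apply: eq_bigr => k _; rewrite -big_split.
    by apply: eq_bigr => l _ /=; ring.
  have : 0 <= T + T.
    by rewrite T2; apply: sumr_ge0 => k _; apply: sumr_ge0 => l _; rewrite mulr_ge0 ?sqr_ge0.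
  lra.
have hc : 0 <= c.
  have -> : c = (vol B)^-1 * ((\sum_k s k * x 0 k) * (\sum_k s k * x 0 k)).
    rewrite /c mulr_suml mulr_sumr; apply: eq_bigr => k _.
    rewrite mulr_sumr mulr_sumr; apply: eq_bigr => l _; ring.
  rewrite mulr_ge0 -?expr2 ?sqr_ge0 // invr_ge0.
  by apply: sumr_ge0 => k _; apply: ltW.
lra.
Qed.
Lemma PD_unit (R : rcfType) n (M : 'M[R]_n) : PD M -> M \in unitmx.
Proof.
move=> H; rewrite unitmxE unitfE; apply/negP => /det0P [v v0 vM].
by have := H v v0; rewrite vM mul0mx mxE ltxx.
Qed.

Lemma trace_mono (R : rcfType) n (M M' : 'M[R]_n) (u : 'rV[R]_n) (a : R) :
  M^T = M -> PD M -> PD M' -> 0 <= a -> M' = M - a *: (u^T *m u) ->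
  \tr (invmx M) <= \tr (invmx M').
Proof.
move=> sM pM pM' a0 eM'.
have [u0|u0] := eqVneq u 0.
  by rewrite eM' u0 trmx0 mul0mx scaler0 subr0.
have uM := PD_unit pM; have uM' := PD_unit pM'.
have sM' : M'^T = M' by rewrite eM' linearB /= linearZ /= trmx_mul trmxK sM.
set X := invmx M; set Y := invmx M'.
have sX : X^T = X by rewrite /X trmx_inv sM.
have sY : Y^T = Y by rewrite /Y trmx_inv sM'.
set w := u *m X.
have wM : w *m M = u by rewrite /w -mulmxA mulVmx // mulmx1.
have w0 : w != 0 by apply: contraNneq u0 => w0; rewrite -wM w0 mul0mx.
set c0 := (w *m M *m w^T) 0 0.
have c0p : 0 < c0 by apply: pM.
have c0e : (w *m u^T) = c0%:M.
  by rewrite -wM trmx_mul sM mulmxA; apply: mx11_scalar.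
have wM' : w *m M' = (1 - a * c0) *: u.
  by rewrite eM' mulmxBr -scalemxAr mulmxA c0e mul_scalar_mx wM scalerA scalerBl scale1r.
have c0e' : (u *m w^T) = c0%:M by rewrite -[u *m _]trmxK trmx_mul trmxK c0e tr_scalar_mx.
set c := 1 - a * c0.
have cp : 0 < c.
  have := pM' w w0; rewrite wM' -scalemxAl c0e' mxE mxE eqxx mulr1n.
  by rewrite pmulr_lgt0.
have uY : u *m Y = c^-1 *: w.
  apply: (canRL (scalerK (lt0r_neq0 cp))).
  by rewrite scalemxAl -wM' -mulmxA mulmxV // mulmx1.
have YX : Y - X = a *: (Y *m u^T *m u *m X).
  rewrite -[Y in LHS]mulmx1 -(mulmxV uM).
  rewrite -[X in _ - X]mul1mx -(mulVmx uM') -/Y.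
  rewrite mulmxA -/X -mulmxBl -mulmxBr eM' opprB addrC subrK.
  by rewrite -scalemxAr -scalemxAl !mulmxA.
rewrite -subr_ge0 -linearB /= YX linearZ /= mulr_ge0 //.
rewrite -!mulmxA mxtrace_mulC !mulmxA -/w -mulmxA.
rewrite -/w -mulmxA mxtrace_mulC -mulmxA.
have -> : Y *m u^T = c^-1 *: w^T by rewrite -sY -trmx_mul uY linearZ.
rewrite -scalemxAr linearZ /= mulr_ge0 //; first by rewrite invr_ge0 ltW.
rewrite /mxtrace; apply: sumr_ge0 => k _; rewrite mxE.
by apply: sumr_ge0 => l _; rewrite !mxE -expr2 sqr_ge0.
Qed.

Lemma sum_delta (R : rcfType) n (i : 'I_n) : \sum_l ((l == i)%:R : R) = 1.
Proof.
rewrite (bigD1 i) //= big1 ?addr0 ?eqxx //.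
by move=> l /negbTE ->.
Qed.

Lemma Ahat_entry (R : rcfType) n (A : 'M[R]_n) i j k l :
  Ahat A i j k l = A k l + A i j * (((k == i)%:R - (k == j)%:R) * ((l == i)%:R - (l == j)%:R)).
Proof. by rewrite /Ahat /evec !mxE big_ord1 !mxE. Qed.

Lemma deg_Ahat (R : rcfType) n (A : 'M[R]_n) i j k : deg (Ahat A i j) k = deg A k.
Proof.
rewrite /deg; under eq_bigr do rewrite Ahat_entry.
rewrite big_split /= -mulr_sumr -mulr_sumr sumrB !sum_delta subrr.
by rewrite !mulr0 addr0.
Qed.

Lemma vol_Ahat (R : rcfType) n (A : 'M[R]_n) i j : vol (Ahat A i j) = vol A.
Proof. by rewrite /vol; apply: eq_bigr => k _; rewrite deg_Ahat. Qed.

Lemma mxBE (R : rcfType) n (M N : 'M[R]_n) k l : (M - N) k l = M k l - N k l.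
Proof. by rewrite !mxE. Qed.
Lemma mxZE (R : rcfType) n (a : R) (N : 'M[R]_n) k l : (a *: N) k l = a * N k l.
Proof. by rewrite !mxE. Qed.
Lemma outerE (R : rcfType) n (u : 'rV[R]_n) k l : (u^T *m u) k l = u 0 k * u 0 l.
Proof. by rewrite !mxE big_ord1 !mxE. Qed.
Lemma uE (R : rcfType) n (A : 'M[R]_n) i j k :
  ((evec R i j)^T *m Dmhalf A) 0 k = ((k == i)%:R - (k == j)%:R) * (Num.sqrt (deg A k))^-1.
Proof. by rewrite /Dmhalf mul_mx_diag !mxE. Qed.

Lemma kemeny_Ahat (R : rcfType) n (r : R) (A : 'M[R]_n) i j :
  kemenyMx r (Ahat A i j) = kemenyMx r A -
    A i j *: (((evec R i j)^T *m Dmhalf A)^T *m ((evec R i j)^T *m Dmhalf A)).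
Proof.
apply/matrixP => k l.
rewrite mxBE mxZE outerE !uE !kemeny_entry !deg_Ahat vol_Ahat Ahat_entry.
ring.
Qed.

Lemma trE (R : rcfType) n (M : 'M[R]_n) k l : M^T k l = M l k.
Proof. by rewrite mxE. Qed.

Lemma kemeny_sym (R : rcfType) n (r : R) (B : 'M[R]_n) : B^T = B -> (kemenyMx r B)^T = kemenyMx r B.
Proof.
move=> sB; apply/matrixP => k l; rewrite trE !kemeny_entry.
have -> : B l k = B k l by rewrite -[in RHS]sB trE.
by rewrite eq_sym; ring.
Qed.

Unset Implicit Arguments.
Set Strict Implicit.
Set Printing Implicit Defensive.

Theorem mainTheorem9 (R : rcfType) (n : nat) (A : 'M[R]_n) (i j : 'I_n) (r : R) :
  A^T = A ->
  (forall k l, 0 <= A k l) ->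
  (forall k, 0 < deg A k) ->
  i != j ->
  0 < A i j ->
  0 < r ->
  0 <= centrality r A i j.
Proof.
move=> sA A0 d0 ij aij r0.
have Asym k l : A k l = A l k by rewrite -[in LHS]sA trE.
have sAh : (Ahat A i j)^T = Ahat A i j.
  apply/matrixP => k l; rewrite trE !Ahat_entry (Asym l k); ring.
have Ah0 : forall k l, 0 <= Ahat A i j k l.
  move=> k l; rewrite Ahat_entry.
  have h1 := A0 k l; have h2 := A0 i j.
  case Eki: (k == i); case Ekj: (k == j); case Eli: (l == i); case Elj: (l == j);
    rewrite /=; try nra.
  - by move/eqP: Eki => ->; move/eqP: Elj => ->; lra.
  - by move/eqP: Ekj => ->; move/eqP: Eli => ->; rewrite Asym; lra.
have dh k : 0 < deg (Ahat A i j) k by rewrite deg_Ahat.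
rewrite /centrality /kemeny_reg.
have := trace_mono (kemeny_sym r sA) (kemeny_PD sA A0 d0 r0) (kemeny_PD sAh Ah0 dh r0)
  (ltW aij) (kemeny_Ahat r A i j).
lra.
Qed.
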